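(* Let $(U,V)$ be a one-dimensional robot game. (1) If $\max(V)\ge -\min(U)$, then every positive counter value is losing. Similarly, if $\min(V)\le -\max(U)$, then every negative counter value is losing. (2) If $\max(U)>-\min(V)$ and there exists a bound $B\in\mathbb{Z}$ such that every counter value greater than $B$ is winning, then every counter value is winning. Similarly, if $\min(U)<-\max(V)$ and there exists a bound $B$ such that every counter value less than $B$ is winning, then every counter value is winning.
   Context: A robot game in dimension one is a pair $(U,V)$ of finite nonempty subsets of $\mathbb{Z}$; $U$ belongs to the reacher and $V$ to the opponent. From an initial counter value $x_0\in\mathbb{Z}$, a play proceeds in rounds: in a round starting at counter value $x$, the opponent chooses $v\in V$ and the counter becomes $x+v$, then the reacher chooses $u\in U$ and the counter becomes $x+v+u$, where the round ends. The reacher wins the play if some round ends at $0$; by convention the reacher wins immediately if the play starts at $0$. Strategies are functions from play prefixes to moves. A counter value $x$ is winning if the reacher has a strategy such that against every opponent strategy the play from $x$ is won by the reacher; it is losing if the opponent has a strategy such that against every reacher strategy the play from $x$ is not won by the reacher. ''Positive'' and ''negative'' mean strictly positive and strictly negative. *)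

(* Defs.v *)
From mathcomp Require Import all_boot all_order all_algebra.
Set Implicit Arguments. Unset Strict Implicit. Unset Printing Implicit Defensive.
Import Order.TTheory GRing.Theory Num.Theory.
Local Open Scope ring_scope.

(* A finite set of integers is represented by a sequence (duplicates harmless);
   a robot game (U, V) requires U and V nonempty. *)

Definition seq_max (s : seq int) : int := foldr Num.max (head 0 s) s.
Definition seq_min (s : seq int) : int := foldr Num.min (head 0 s) s.

(* A play prefix is the list of all counter values so far, in chronological
   order (initial value, after opponent's move, after reacher's move, ...).
   A strategy maps play prefixes to moves. *)
Definition strategy := seq int -> int.
Definition valid_strategy (S : seq int) (f : strategy) : Prop :=
  forall h : seq int, f h \in S.

Fixpoint history (opp rea : strategy) (x0 : int) (k : nat) : seq int :=
  match k with
  | 0%N => [:: x0]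
  | k'.+1 =>
      let h := history opp rea x0 k' in
      let h1 := rcons h (last x0 h + opp h) in
      rcons h1 (last x0 h1 + rea h1)
  end.

Definition round_end (opp rea : strategy) (x0 : int) (k : nat) : int :=
  last x0 (history opp rea x0 k).

Definition reacher_wins (opp rea : strategy) (x0 : int) : Prop :=
  x0 = 0 \/ exists k : nat, (0 < k)%N /\ round_end opp rea x0 k = 0.

Definition winning (U V : seq int) (x : int) : Prop :=
  exists rea : strategy, valid_strategy U rea /\
    forall opp : strategy, valid_strategy V opp -> reacher_wins opp rea x.

Definition losing (U V : seq int) (x : int) : Prop :=
  exists opp : strategy, valid_strategy V opp /\
    forall rea : strategy, valid_strategy U rea -> ~ reacher_wins opp rea x.

(* Main.v *)
From Stdlib Require Import Classical ClassicalEpsilon.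
Require Import Defs.
From mathcomp Require Import all_boot all_order all_algebra.
From mathcomp Require Import zify.
Import Order.TTheory GRing.Theory Num.Theory.
Local Open Scope ring_scope.

Lemma foldr_max_ge (d : int) (s : seq int) : forall a, a \in d :: s -> a <= foldr Num.max d s.
Proof.
elim: s => [|b s IH] a /=; rewrite !inE.
  by move/eqP->.
case/orP=> [/eqP->|/orP[/eqP->|H]]; rewrite le_max ?lexx ?orbT //.
- by rewrite (IH d) ?orbT // inE eqxx.
- by rewrite (IH a) ?orbT // inE H orbT.
Qed.

Lemma foldr_max_in (d : int) (s : seq int) : foldr Num.max d s \in d :: s.
Proof.
elim: s => [|b s IH] /=; first by rewrite inE.
rewrite /Num.max; case: ifP => _; rewrite !inE ?eqxx ?orbT //.
move: IH; rewrite inE => /orP[->|H]; first by [].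
by rewrite H !orbT.
Qed.

Lemma foldr_min_le (d : int) (s : seq int) : forall a, a \in d :: s -> foldr Num.min d s <= a.
Proof.
elim: s => [|b s IH] a /=; rewrite !inE.
  by move/eqP->.
case/orP=> [/eqP->|/orP[/eqP->|H]]; rewrite ge_min ?lexx ?orbT //.
- by rewrite (IH d) ?orbT // inE eqxx.
- by rewrite (IH a) ?orbT // inE H orbT.
Qed.

Lemma foldr_min_in (d : int) (s : seq int) : foldr Num.min d s \in d :: s.
Proof.
elim: s => [|b s IH] /=; first by rewrite inE.
rewrite /Num.min; case: ifP => _; rewrite !inE ?eqxx ?orbT //.
move: IH; rewrite inE => /orP[->|H]; first by [].
by rewrite H !orbT.
Qed.

Lemma seq_max_ge (s : seq int) a : a \in s -> a <= seq_max s.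
Proof.
case: s => [//|b t] H; rewrite /seq_max /=.
by apply: (foldr_max_ge b (b :: t)); rewrite inE H orbT.
Qed.

Lemma seq_max_in (s : seq int) : s != [::] -> seq_max s \in s.
Proof.
case: s => [//|b t] _; rewrite /seq_max.
have := foldr_max_in b (b :: t); rewrite inE => /orP[/eqP->|//].
by rewrite inE eqxx.
Qed.

Lemma seq_min_le (s : seq int) a : a \in s -> seq_min s <= a.
Proof.
case: s => [//|b t] H; rewrite /seq_min /=.
by apply: (foldr_min_le b (b :: t)); rewrite inE H orbT.
Qed.

Lemma seq_min_in (s : seq int) : s != [::] -> seq_min s \in s.
Proof.
case: s => [//|b t] _; rewrite /seq_min.
have := foldr_min_in b (b :: t); rewrite inE => /orP[/eqP->|//].
by rewrite inE eqxx.
Qed.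

Lemma round_end_S opp rea x k :
  round_end opp rea x k.+1 =
  round_end opp rea x k + opp (history opp rea x k) +
  rea (rcons (history opp rea x k) (round_end opp rea x k + opp (history opp rea x k))).
Proof. by rewrite /round_end /= !last_rcons. Qed.

Lemma part1a U V : V != [::] -> - seq_min U <= seq_max V -> forall x : int, 0 < x -> losing U V x.
Proof.
move=> hV H x x0.
exists (fun _ => seq_max V); split; first by move=> h; apply: seq_max_in.
move=> rea vr.
have K : forall k, x <= round_end (fun _ => seq_max V) rea x k.
  elim=> [|k IH]; first by rewrite /round_end /=.
  rewrite round_end_S.
  set r := rea _. have : seq_min U <= r by apply: seq_min_le; apply: vr.
  lia.
case=> [E|[k [_ E]]]; first lia.
have := K k; lia.
Qed.

Lemma part1b U V : V != [::] -> seq_min V <= - seq_max U -> forall x : int, x < 0 -> losing U V x.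
Proof.
move=> hV H x x0.
exists (fun _ => seq_min V); split; first by move=> h; apply: seq_min_in.
move=> rea vr.
have K : forall k, round_end (fun _ => seq_min V) rea x k <= x.
  elim=> [|k IH]; first by rewrite /round_end /=.
  rewrite round_end_S.
  set r := rea _. have : r <= seq_max U by apply: seq_max_ge; apply: vr.
  lia.
case=> [E|[k [_ E]]]; first lia.
have := K k; lia.
Qed.

Lemma history_S opp rea x k : history opp rea x k.+1 =
  let h := history opp rea x k in
  let h1 := rcons h (last x h + opp h) in rcons h1 (last x h1 + rea h1).
Proof. by []. Qed.

Lemma history_head opp rea y k : exists t, history opp rea y k = y :: t.
Proof.
elim: k => [|k [t IH]] /=; first by exists [::].
by rewrite IH; eexists.
Qed.

Lemma W_ex U V (u : int) (hu : u \in U) (y : int) :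
  exists r : strategy, valid_strategy U r /\
    (winning U V y -> forall opp, valid_strategy V opp -> reacher_wins opp r y).
Proof.
case: (classic (winning U V y)) => [[r [vr Hr]]|N].
  by exists r; split.
by exists (fun _ => u); split => // h.
Qed.

Lemma step U V (u : int) (hu : u \in U) (x : int) :
  (forall v, v \in V -> winning U V (x + v + u)) -> winning U V x.
Proof.
move=> HV.
pose W y := proj1_sig (constructive_indefinite_description _ (@W_ex U V u hu y)).
have WP y : valid_strategy U (W y) /\
    (winning U V y -> forall opp, valid_strategy V opp -> reacher_wins opp (W y) y).
  exact: (proj2_sig (constructive_indefinite_description _ (@W_ex U V u hu y))).
pose rea' : strategy := fun h => if size h == 2%N then u else W (nth 0 h 2) (drop 2 h).
exists rea'; split.
  by move=> h; rewrite /rea'; case: ifP => _ //; case: (WP (nth 0 h 2)).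
move=> opp vo.
set v := opp [:: x].
set y := x + v + u.
pose opp' : strategy := fun h => opp [:: x, x + v & h].
have Hist : forall k, history opp rea' x k.+1 = [:: x, x + v & history opp' (W y) y k].
  elim=> [|k IH]; first by rewrite /= /rea' /=.
  rewrite history_S IH /=.
  have [t Ht] := history_head opp' (W y) y k.
  rewrite /rea' /= size_rcons /= Ht /= -Ht. by [].
have vo' : valid_strategy V opp' by move=> h; apply: vo.
have vin : v \in V by apply: vo.
have [_ Wy] := WP y.
have := Wy (HV v vin) opp' vo'.
case=> [E|[k [_ E]]]; right.
  exists 1%N; split => //; rewrite /round_end Hist /=; exact: E.
exists k.+1; split => //.
rewrite /round_end Hist /=.
have [t Ht] := history_head opp' (W y) y k.
by move: E; rewrite /round_end Ht.
Qed.

Theorem proposition2 (U V : seq int) (hU : U != [::]) (hV : V != [::]) :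
  ((- seq_min U <= seq_max V) -> forall x : int, 0 < x -> losing U V x) /\
  ((seq_min V <= - seq_max U) -> forall x : int, x < 0 -> losing U V x) /\
  ((- seq_min V < seq_max U) ->
     (exists B : int, forall x : int, B < x -> winning U V x) ->
     forall x : int, winning U V x) /\
  ((seq_min U < - seq_max V) ->
     (exists B : int, forall x : int, x < B -> winning U V x) ->
     forall x : int, winning U V x).
Proof.
split; first exact: part1a.
split; first exact: part1b.
split.
  move=> H [B HB].
  have K : forall n : nat, forall x : int, B < x + n%:Z -> winning U V x.
    elim=> [|n IH] x Hx; first by apply: HB; lia.
    case: (ltP B x) => Bx; first exact: HB.
    apply: (@step U V _ (@seq_max_in U hU)) => w win.
    apply: IH. have := @seq_min_le V w win. lia.
  move=> x; apply: (K (`|B - x|%N).+1); clear -x; lia.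
move=> H [B HB].
have K : forall n : nat, forall x : int, x - n%:Z < B -> winning U V x.
  elim=> [|n IH] x Hx; first by apply: HB; lia.
  case: (ltP x B) => Bx; first exact: HB.
  apply: (@step U V _ (@seq_min_in U hU)) => w win.
  apply: IH. have := @seq_max_ge V w win. lia.
move=> x; apply: (K (`|x - B|%N).+1); clear -x; lia.
Qed.
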